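(* Let $R$ be a commutative ring with unity and let $G=\{(a,b,c):a,b,c\in R\}$ with operation $(a,b,c)\cdot(a',b',c')=(a+a',b+b',c+c'+ab')$. Then $G$ is a group of nilpotence class at most two with $[(a,b,c),(a',b',c')]=(0,0,ab'-a'b)$, and for each $x\in R$ the map $\psi_x(a,b,c)=(xa,xb,x^2c)$ is an endomorphism of $G$. Setting $g\circ_x h=g\cdot\psi_x(g)\cdot h\cdot\psi_x(g)^{-1}$, one has, for $g=(a,b,c)$, $h=(a',b',c')$, $g\circ_x h=g\cdot h\cdot(0,0,x(ab'-a'b))$; the family $(\circ_x:x\in R)$ is a brace block on $G$, and its operations are pairwise distinct, so the brace block has cardinality $|R|$. Moreover, if $R$ is a topological ring and $(r_n)$ is a sequence in $R$ converging to $0$, then $\lim_{n\to\infty}g\circ_{r_n}h=g\cdot h$ for all $g,h\in G$ (in the product topology on $G=R^3$).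
   Context: Commutator convention: $[x,y]=xyx^{-1}y^{-1}$. A skew brace is a triple $(G,\cdot,\circ)$ where $(G,\cdot)$ and $(G,\circ)$ are groups and $g\circ(h\cdot k)=(g\circ h)\cdot g^{-1}\cdot(g\circ k)$ for all $g,h,k$. A bi-skew brace is a triple $(G,\cdot,\circ)$ such that both $(G,\cdot,\circ)$ and $(G,\circ,\cdot)$ are skew braces. A brace block on a set $G$ is a family of group operations on $G$ any two of which form a bi-skew brace. *)

(* Defs.v *)
From HB Require Import structures.
From mathcomp Require Import all_boot all_order all_algebra.
From mathcomp Require Import all_classical all_reals all_analysis.
Set Implicit Arguments. Unset Strict Implicit. Unset Printing Implicit Defensive.
Import GRing.Theory.
Local Open Scope ring_scope.

Definition is_group (T : Type) (op : T -> T -> T) : Prop :=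
  associative op /\
  exists e : T, left_id e op /\ right_id e op /\
    forall x, exists y, op x y = e /\ op y x = e.

Definition skew_brace (T : Type) (dot circ : T -> T -> T) : Prop :=
  is_group dot /\ is_group circ /\
  forall (e g gi h k : T), left_id e dot -> right_id e dot -> dot g gi = e ->
    circ g (dot h k) = dot (dot (circ g h) gi) (circ g k).

Definition bi_skew_brace (T : Type) (dot circ : T -> T -> T) : Prop :=
  skew_brace dot circ /\ skew_brace circ dot.

Definition brace_block (I T : Type) (ops : I -> T -> T -> T) : Prop :=
  (forall i, is_group (ops i)) /\ forall i j, bi_skew_brace (ops i) (ops j).

Section HeisG.
Variable R : comPzRingType.

Definition hmul (g h : R * R * R) : R * R * R :=
  (g.1.1 + h.1.1, g.1.2 + h.1.2, g.2 + h.2 + g.1.1 * h.1.2).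

Definition hone : R * R * R := (0, 0, 0).

Definition hinv (g : R * R * R) : R * R * R :=
  (- g.1.1, - g.1.2, - g.2 + g.1.1 * g.1.2).

Definition hcomm (x y : R * R * R) : R * R * R :=
  hmul (hmul (hmul x y) (hinv x)) (hinv y).

Definition hpsi (x : R) (g : R * R * R) : R * R * R :=
  (x * g.1.1, x * g.1.2, x ^+ 2 * g.2).

Definition hcirc (x : R) (g h : R * R * R) : R * R * R :=
  hmul (hmul (hmul g (hpsi x g)) h) (hinv (hpsi x g)).
End HeisG.

#[short(type="topComPzRingType")]
HB.structure Definition TopComPzRing := {R of Topological R & GRing.ComPzRing R}.

Definition topological_ring (R : topComPzRingType) : Prop :=
  continuous (fun p : R * R => p.1 + p.2) /\
  continuous (fun x : R => - x) /\
  continuous (fun p : R * R => p.1 * p.2).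

(* Main.v *)
Require Import Defs.
From HB Require Import structures.
From mathcomp Require Import all_boot all_order all_algebra.
From mathcomp Require Import all_classical all_reals all_analysis.
From mathcomp Require Import ring.
Import GRing.Theory.
Local Open Scope classical_set_scope.
Local Open Scope ring_scope.

Section Alg.
Variable R : comPzRingType.
Implicit Types (g h k : R * R * R) (x : R).

Lemma hcircE x g h : hcirc x g h =
  (g.1.1 + h.1.1, g.1.2 + h.1.2,
   g.2 + h.2 + g.1.1 * h.1.2 + x * (g.1.1 * h.1.2 - h.1.1 * g.1.2)).
Proof.
case: g => [[a b] c]; case: h => [[a' b'] c'].
rewrite /hcirc /hmul /hpsi /hinv /=; congr (_, _, _); ring.
Qed.

Lemma hcirc_assoc x : associative (@hcirc R x).
Proof.
move=> [[a b] c] [[a' b'] c'] [[a'' b''] c'']; rewrite !hcircE /=.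
congr (_, _, _); ring.
Qed.

Lemma hcirc_0l x g : hcirc x (hone R) g = g.
Proof. case: g => [[a b] c]; rewrite hcircE /=; congr (_,_,_); ring. Qed.
Lemma hcirc_0r x g : hcirc x g (hone R) = g.
Proof. case: g => [[a b] c]; rewrite hcircE /=; congr (_,_,_); ring. Qed.
Lemma hcirc_Vr x g : hcirc x g (hinv g) = hone R.
Proof. case: g => [[a b] c]; rewrite hcircE /hinv /hone /=; congr (_,_,_); ring. Qed.
Lemma hcirc_Vl x g : hcirc x (hinv g) g = hone R.
Proof. case: g => [[a b] c]; rewrite hcircE /hinv /hone /=; congr (_,_,_); ring. Qed.

Lemma hcirc_group x : is_group (@hcirc R x).
Proof.
split; first exact: hcirc_assoc.
exists (hone R); split; first exact: hcirc_0l.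
split; first exact: hcirc_0r.
move=> g; exists (hinv g); split; [exact: hcirc_Vr|exact: hcirc_Vl].
Qed.

Lemma hcirc_skew i j : skew_brace (@hcirc R i) (@hcirc R j).
Proof.
split; first exact: hcirc_group.
split; first exact: hcirc_group.
move=> e g gi h k le re ggi.
have e0 : e = hone R by rewrite -[LHS](hcirc_0r i) le.
have -> : gi = hinv g.
  rewrite -[gi](hcirc_0l i) -(hcirc_Vl i g) -hcirc_assoc ggi e0 hcirc_0r //.
move: g h k {ggi} => [[a b] c] [[a' b'] c'] [[a'' b''] c''].
rewrite !hcircE /hinv /=; congr (_,_,_); ring.
Qed.

Lemma hcirc_inj : injective (@hcirc R).
Proof.
move=> x y E.
have := congr1 (fun f => (f ((1, 0, 0) : R * R * R) (0, 1, 0)).2) E.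
rewrite !hcircE /= => H.
have : (0 + 0 + 1 * 1 + x * (1 * 1 - 0 * 0)) - (0 + 0 + 1 * 1 + y * (1 * 1 - 0 * 0)) = x - y by ring.
by rewrite H subrr => /esym/eqP; rewrite subr_eq0 => /eqP.
Qed.

End Alg.

Lemma top_part (R : topComPzRingType) : topological_ring R ->
    forall r : nat -> R, r @ \oo --> (0 : R) ->
    forall g h : R * R * R,
      (fun n => hcirc (r n) g h) @ \oo --> hmul g h.
Proof.
move=> [cadd [_ cmul]] r r0 [[a b] c] [[a' b'] c'].
have E : (fun n => hcirc (r n) (a, b, c) (a', b', c')) =
  (fun n => (a + a', b + b', (c + c' + a * b') + r n * (a * b' - a' * b))).
  by apply: funext => n; rewrite hcircE.
rewrite E /hmul /=.
have H3 : (fun n => c + c' + a * b' + r n * (a * b' - a' * b)) @ \oo --> (c + c' + a * b').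
  have Hm : (fun n => r n * (a * b' - a' * b)) @ \oo --> 0 * (a * b' - a' * b).
    exact: (continuous2_cvg _ (h := fun u v : R => u * v) (cmul (_, _)) r0 (cvg_cst _)).
  have := (continuous2_cvg _ (h := fun u v : R => u + v) (cadd (_, _)) (cvg_cst (c + c' + a * b')) Hm).
  rewrite mul0r addr0 => H; exact: H.
have P := cvg_pair (cvg_pair (cvg_cst (a+a')) (cvg_cst (b+b'))) H3. apply: P; try exact: _.
Qed.

Theorem mainTheorem10 :
  (forall R : comPzRingType,
    is_group (@hmul R) /\
    (forall g : R * R * R, hmul (hone R) g = g /\ hmul g (hone R) = g) /\
    (forall g : R * R * R, hmul g (hinv g) = hone R /\ hmul (hinv g) g = hone R) /\
    (forall a b c a' b' c' : R,
        hcomm (a, b, c) (a', b', c') = (0, 0, a * b' - a' * b)) /\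
    (forall x y z : R * R * R, hmul (hcomm x y) z = hmul z (hcomm x y)) /\
    (forall (x : R) (g h : R * R * R), hpsi x (hmul g h) = hmul (hpsi x g) (hpsi x h)) /\
    (forall (x a b c a' b' c' : R),
        hcirc x (a, b, c) (a', b', c')
        = hmul (hmul (a, b, c) (a', b', c')) (0, 0, x * (a * b' - a' * b))) /\
    brace_block (@hcirc R) /\
    injective (@hcirc R)) /\
  (forall R : topComPzRingType, topological_ring R ->
    forall r : nat -> R, r @ \oo --> (0 : R) ->
    forall g h : R * R * R,
      (fun n => hcirc (r n) g h) @ \oo --> hmul g h).
Proof.
split; last exact: top_part.
move=> R.
have hmulE : forall g h : R * R * R, hmul g h = hcirc 0 g h.
  move=> [[a b] c] [[a' b'] c']; rewrite hcircE /hmul /=; congr (_,_,_); ring.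
split.
  have -> : @hmul R = @hcirc R 0 by apply: funext => g; apply: funext => h.
  exact: hcirc_group.
split; first by move=> g; rewrite !hmulE hcirc_0l hcirc_0r.
split; first by move=> g; rewrite !hmulE hcirc_Vl hcirc_Vr.
split.
  move=> a b c a' b' c'; rewrite /hcomm /hmul /hinv /=; congr (_,_,_); ring.
split.
  move=> [[a b] c] [[a' b'] c'] [[a'' b''] c'']; rewrite /hcomm /hmul /hinv /=; congr (_,_,_); ring.
split.
  move=> x [[a b] c] [[a' b'] c']; rewrite /hpsi /hmul /=; congr (_,_,_); ring.
split.
  move=> x a b c a' b' c'; rewrite hcircE /hmul /=; congr (_,_,_); ring.
split; last exact: hcirc_inj.
split; [exact: hcirc_group| move=> i j; split; exact: hcirc_skew].
Qed.
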